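(* Let $A$ be a commutative noetherian ring and $P$ a projective $A$-module. The map $\nu:\widetilde Q(P)\to\mathcal{Q}(P)$, $\nu(f,p,s)=(f,s)$, induces a bijection $\overline{\nu}:\pi_0(\widetilde Q(P))\to\pi_0(\mathcal{Q}(P))$.
   Context: $P^*=\mathrm{Hom}_A(P,A)$ and $P[T]=P\otimes_AA[T]$. Define $\widetilde Q(P)=\{(f,p,s)\in P^*\oplus P\oplus A: f(p)+s(s-1)=0\}$ and $\mathcal{Q}(P)=\{(f,s)\in P^*\oplus A: s(1-s)\in f(P)\}$; define the same sets over $A[T]$ for $P[T]$. For $\mathcal{F}=\widetilde Q$ or $\mathcal{Q}$, $\pi_0(\mathcal{F}(P))$ is the quotient of $\mathcal{F}(P)$ by the equivalence relation generated by $H(0)\sim H(1)$ for $H(T)\in\mathcal{F}(P[T])$, where $H(t)$ is the specialization $T=t$. *)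

(* Defs.v *)
From HB Require Import structures.
From mathcomp Require Import all_boot all_order all_algebra.
From Stdlib Require Import Relations ClassicalEpsilon.
Set Implicit Arguments. Unset Strict Implicit. Unset Printing Implicit Defensive.
Import GRing.Theory.
Local Open Scope ring_scope.

Section Defs.
Variable A : comNzRingType.

Definition is_ideal (I : A -> Prop) : Prop :=
  I 0 /\ (forall x y, I x -> I y -> I (x + y)) /\ (forall a x, I x -> I (a * x)).

Definition finitely_generated_ideal (I : A -> Prop) : Prop :=
  exists s : seq A, forall x, I x <->
    exists c : seq A, size c = size s /\ x = \sum_(i < size s) c`_i * s`_i.

Definition noetherian_ring : Prop :=
  forall I : A -> Prop, is_ideal I -> finitely_generated_ideal I.

Definition is_linear (M N : lmodType A) (g : M -> N) : Prop :=
  forall a x y, g (a *: x + y) = a *: g x + g y.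

Definition is_form (P : lmodType A) (f : P -> A) : Prop :=
  forall a x y, f (a *: x + y) = a * f x + f y.

Definition projective (P : lmodType A) : Prop :=
  forall (M N : lmodType A) (g : M -> N) (h : P -> N),
    is_linear g -> (forall y, exists x, g x = y) -> is_linear h ->
    exists k : P -> M, is_linear k /\ forall x, g (k x) = h x.

(* ---------- P[T] = P (x)_A A[T] : finitely supported coefficient sequences ---------- *)
Variable P : lmodType A.

Definition fsupp (c : nat -> P) : Prop := exists n, forall i, (n <= i)%N -> c i = 0.

Record polyM := PolyM { pcoef : nat -> P; pcoefP : fsupp pcoef }.

Lemma fsupp_add (c d : nat -> P) : fsupp c -> fsupp d -> fsupp (fun i => c i + d i).
Proof.
move=> [n Hn] [m Hm]; exists (maxn n m) => i Hi.
rewrite Hn ?Hm ?addr0 //; [exact: leq_trans (leq_maxr n m) Hi|exact: leq_trans (leq_maxl n m) Hi].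
Qed.

Definition scale_coef (q : {poly A}) (c : nat -> P) (i : nat) : P :=
  \sum_(j < i.+1) q`_j *: c (i - j)%N.

Lemma fsupp_scale (q : {poly A}) (c : nat -> P) : fsupp c -> fsupp (scale_coef q c).
Proof.
move=> [n Hn]; exists (size q + n)%N => i Hi.
rewrite /scale_coef big1 // => j _.
have [Hj|Hj] := leqP (size q) j; first by rewrite nth_default // scale0r.
rewrite Hn ?scaler0 //.
have := ltn_ord j; rewrite ltnS => Hji.
rewrite leq_subRL //; apply: leq_trans Hi; rewrite leq_add2r; exact: ltnW.
Qed.

Lemma fsupp_const (x : P) : fsupp (fun i => if i == 0%N then x else 0).
Proof. by exists 1%N => -[|i]. Qed.

Definition padd (p r : polyM) : polyM := PolyM (fsupp_add (pcoefP p) (pcoefP r)).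
Definition pscale (q : {poly A}) (p : polyM) : polyM := PolyM (fsupp_scale q (pcoefP p)).
Definition pconst (x : P) : polyM := PolyM (fsupp_const x).

Definition pbound (p : polyM) : nat := proj1_sig (constructive_indefinite_description _ (pcoefP p)).
Definition peval (t : A) (p : polyM) : P := \sum_(i < pbound p) t ^+ i *: pcoef p i.

Definition is_formT (F : polyM -> {poly A}) : Prop :=
  (forall p r, F (padd p r) = F p + F r) /\ (forall q p, F (pscale q p) = q * F p).

Definition fspec (t : A) (F : polyM -> {poly A}) : P -> A := fun x => (F (pconst x)).[t].

Definition Qtilde (x : (P -> A) * P * A) : Prop :=
  let: (f, p, s) := x in is_form f /\ f p + s * (s - 1) = 0.

Definition Qcal (x : (P -> A) * A) : Prop :=
  let: (f, s) := x in is_form f /\ exists p, f p = s * (1 - s).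

Definition QtildeT (H : (polyM -> {poly A}) * polyM * {poly A}) : Prop :=
  let: (F, p, s) := H in is_formT F /\ F p + s * (s - 1) = 0.

Definition QcalT (H : (polyM -> {poly A}) * {poly A}) : Prop :=
  let: (F, s) := H in is_formT F /\ exists p, F p = s * (1 - s).

Definition specT (t : A) (H : (polyM -> {poly A}) * polyM * {poly A}) : (P -> A) * P * A :=
  let: (F, p, s) := H in (fspec t F, peval t p, s.[t]).

Definition specC (t : A) (H : (polyM -> {poly A}) * {poly A}) : (P -> A) * A :=
  let: (F, s) := H in (fspec t F, s.[t]).

(* elementary homotopies and the generated equivalence relations defining pi_0 *)
Definition homot_tilde (x y : (P -> A) * P * A) : Prop :=
  exists H, QtildeT H /\ specT 0 H = x /\ specT 1 H = y.
Definition homot_cal (x y : (P -> A) * A) : Prop :=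
  exists H, QcalT H /\ specC 0 H = x /\ specC 1 H = y.

Definition pi0_tilde_rel := clos_refl_sym_trans _ homot_tilde.
Definition pi0_cal_rel := clos_refl_sym_trans _ homot_cal.

Definition nu (x : (P -> A) * P * A) : (P -> A) * A := let: (f, p, s) := x in (f, s).

End Defs.

(* Main.v *)
Require Import Defs.
From mathcomp Require Import all_boot all_order all_algebra ring.
From Stdlib Require Import Relations FunctionalExtensionality ProofIrrelevance ClassicalEpsilon.
Set Implicit Arguments. Unset Strict Implicit. Unset Printing Implicit Defensive.
Import GRing.Theory.
Local Open Scope ring_scope.

Section Proof.
Variable A : comNzRingType.
Variable P : lmodType A.

Lemma pboundP (c : polyM P) i : (pbound c <= i)%N -> pcoef c i = 0.
Proof. rewrite /pbound; case: constructive_indefinite_description => n Hn /=; exact: Hn. Qed.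

Lemma polyM_eq (a b : polyM P) : pcoef a =1 pcoef b -> a = b.
Proof.
case: a b => ca ha [cb hb] /= E.
have E' : ca = cb := functional_extensionality _ _ E.
subst; f_equal; apply: proof_irrelevance.
Qed.

Section Form.
Variable f : P -> A.
Hypothesis Hf : is_form f.
Lemma form0 : f 0 = 0.
Proof. have := Hf 1 0 0; rewrite scale1r addr0 mul1r => /(congr1 (fun z => z - f 0)). by rewrite addrK subrr. Qed.
Lemma formD x y : f (x + y) = f x + f y.
Proof. by have := Hf 1 x y; rewrite scale1r mul1r. Qed.
Lemma formZ a x : f (a *: x) = a * f x.
Proof. by have := Hf a x 0; rewrite addr0 form0 addr0. Qed.
Lemma formB x y : f (x - y) = f x - f y.
Proof. by rewrite -scaleN1r formD formZ mulN1r. Qed.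
Lemma form_sum n (g : 'I_n -> P) : f (\sum_(i < n) g i) = \sum_(i < n) f (g i).
Proof.
elim: n g => [|n IH] g; first by rewrite !big_ord0 form0.
by rewrite !big_ord_recr /= formD IH.
Qed.
End Form.

Lemma sum_shrink (g : nat -> P) n m : (n <= m)%N -> (forall i, (n <= i)%N -> g i = 0) ->
  \sum_(i < m) g i = \sum_(i < n) g i.
Proof.
move=> nm H; rewrite -(subnKC nm) big_split_ord /= [X in _ + X]big1 ?addr0 // => i _.
apply: H; exact: leq_addr.
Qed.

Lemma peval_bound t (c : polyM P) n : (forall i, (n <= i)%N -> pcoef c i = 0) ->
  peval t c = \sum_(i < n) t ^+ i *: pcoef c i.
Proof.
move=> Hn; rewrite /peval.
have H1 : forall i, (n <= i)%N -> t ^+ i *: pcoef c i = 0 by move=> i /Hn ->; rewrite scaler0.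
have H2 : forall i, (pbound c <= i)%N -> t ^+ i *: pcoef c i = 0 by move=> i /pboundP ->; rewrite scaler0.
case: (leqP n (pbound c)) => h.
  exact: (@sum_shrink (fun i : nat => t ^+ i *: pcoef c i) n (pbound c) h H1).
symmetry; exact: (@sum_shrink (fun i : nat => t ^+ i *: pcoef c i) (pbound c) n (ltnW h) H2).
Qed.

Lemma scaleC_coef a (c : nat -> P) i : scale_coef a%:P c i = a *: c i.
Proof.
rewrite /scale_coef big_ord_recl /= coefC eqxx subn0 big1 ?addr0 // => j _.
by rewrite coefC /= scale0r.
Qed.

Lemma scaleXn_coef n (x : P) i :
  scale_coef 'X^n (fun k => if k == 0%N then x else 0) i = if i == n then x else 0.
Proof.
rewrite /scale_coef.
transitivity (\sum_(j < i.+1 | j == n :> nat) (if (i - j == 0)%N then x else 0)).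
  rewrite [RHS]big_mkcond; apply: eq_bigr => j _; rewrite coefXn.
  by case: eqP => _; rewrite ?scale1r ?scale0r.
rewrite (big_ord1_eq _ (fun j : nat => if (i - j == 0)%N then x else 0)); case: (ltngtP i n) => h.
- by rewrite ltnNge h.
- by rewrite ltnW // subn_eq0 leqNgt h.
- by rewrite h ltnSn subnn.
Qed.

Section FormT.
Variable F : polyM P -> {poly A}.
Hypothesis HF : is_formT F.

Lemma pconst_lin a (x y : P) : pconst (a *: x + y) = padd (pscale a%:P (pconst x)) (pconst y).
Proof.
apply: polyM_eq => i /=; rewrite scaleC_coef /=.
by case: eqP => _; rewrite ?scaler0 ?addr0.
Qed.

Lemma F0 : F (pconst 0) = 0.
Proof.
have E : pconst (0 : P) = padd (pconst 0) (pconst 0).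
  by apply: polyM_eq => i /=; case: eqP; rewrite addr0.
have := HF.1 (pconst 0) (pconst 0); rewrite -E => /(congr1 (fun z => z - F (pconst 0))).
by rewrite addrK subrr.
Qed.

Lemma fspec_form t : is_form (fspec t F).
Proof.
move=> a x y; rewrite /fspec pconst_lin HF.1 HF.2.
by rewrite hornerD hornerCM.
Qed.

Lemma eval_spec t n (c : polyM P) : (forall i, (n <= i)%N -> pcoef c i = 0) ->
  (F c).[t] = fspec t F (\sum_(i < n) t ^+ i *: pcoef c i).
Proof.
elim: n c => [|n IH] c Hc.
  have -> : c = pconst 0.
    by apply: polyM_eq => i /=; rewrite Hc //; case: eqP.
  by rewrite F0 big_ord0 form0 ?horner0 //; exact: fspec_form.
pose d := fun i => if i == n then 0 else pcoef c i.
have dP : fsupp d by exists n.+1 => i hi; rewrite /d Hc //; case: eqP.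
have E : c = padd (PolyM dP) (pscale 'X^n (pconst (pcoef c n))).
  apply: polyM_eq => i /=; rewrite scaleXn_coef /d.
  by case: eqP => [->|_]; rewrite ?add0r ?addr0.
rewrite {1}E HF.1 HF.2 hornerD hornerM hornerXn.
rewrite (IH (PolyM dP)); last first.
  move=> i hi /=; rewrite /d; case: eqP => // ne; apply: Hc; rewrite ltn_neqAle hi andbT eq_sym; apply/eqP => e; apply: ne; by rewrite e.
rewrite big_ord_recr /= addrC (fspec_form t (t ^+ n)) addrC; congr (_ + _).
congr (fspec t F _); apply: eq_bigr => i _ /=; rewrite /d.
by have := ltn_ord i; case: eqP => // ->; rewrite ltnn.
Qed.

End FormT.

Definition ext (f : P -> A) (c : polyM P) : {poly A} := \poly_(i < pbound c) f (pcoef c i).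

Section Ext.
Variable f : P -> A.
Hypothesis Hf : is_form f.

Lemma coef_ext c i : (ext f c)`_i = f (pcoef c i).
Proof.
rewrite /ext coef_poly; case: ltnP => // h.
by rewrite pboundP // form0.
Qed.

Lemma ext_formT : is_formT (ext f).
Proof.
split.
  by move=> c d; apply/polyP => i; rewrite coefD !coef_ext /= formD.
move=> q c; apply/polyP => i; rewrite coefM coef_ext /= /scale_coef form_sum //.
by apply: eq_bigr => j _; rewrite formZ // coef_ext.
Qed.

Lemma fspec_ext t : fspec t (ext f) = f.
Proof.
apply: functional_extensionality => x; rewrite /fspec.
have -> : ext f (pconst x) = (f x)%:P.
  by apply/polyP => i; rewrite coef_ext coefC /=; case: eqP => //; rewrite form0.
by rewrite hornerC.
Qed.
End Ext.

Lemma part1 (x : (P -> A) * P * A) : Qtilde x -> Qcal (nu x).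
Proof.
case: x => [[f p] s] [Hf E]; split => //; exists p.
have -> : f p = (f p + s * (s - 1)) - s * (s - 1) by ring.
rewrite E; ring.
Qed.

Lemma lift_cal (z : (P -> A) * A) : Qcal z -> exists x, Qtilde x /\ nu x = z.
Proof.
case: z => f s [Hf [p Hp]]; exists (f, p, s); split => //; split => //.
rewrite Hp; ring.
Qed.

Lemma QtildeT_spec t (H : (polyM P -> {poly A}) * polyM P * {poly A}) : QtildeT H -> Qtilde (specT t H).
Proof.
case: H => [[F p] s] [HF E] /=; split; first exact: fspec_form.
rewrite /peval -(eval_spec HF); last exact: pboundP.
by have := congr1 (fun q => q.[t]) E; rewrite /= !hornerE.
Qed.

Lemma fiber (x y : (P -> A) * P * A) : Qtilde x -> Qtilde y -> nu x = nu y -> homot_tilde x y.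
Proof.
case: x => [[f p] s]; case: y => [[f' p'] s'] [Hf E] [_ E'] [Ef Es]; subst f' s'.
pose r := fun i => if i == 0%N then p else if i == 1%N then p' - p else 0.
have rP : fsupp r by exists 2%N => -[|[|i]].
have Er : ext f (PolyM rP) = (f p)%:P.
  apply/polyP => i; rewrite coef_ext // coefC /= /r.
  case: i => [|[|i]] //=; last by rewrite form0.
  rewrite formB //.
  have -> : f p' = f p by move: E'; rewrite -E => /addIr.
  by rewrite subrr.
have Hev : forall t, peval t (PolyM rP) = p + t *: (p' - p).
  move=> t; rewrite (@peval_bound _ _ 2%N); last by move=> [|[|i]].
  by rewrite !big_ord_recr big_ord0 /= add0r expr0 scale1r expr1.
exists (ext f, PolyM rP, s%:P); split.
  split; first exact: ext_formT.
  rewrite Er -polyC1 -polyCB -polyCM -polyCD E //.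
split; rewrite /= fspec_ext // Hev hornerC.
  by rewrite scale0r addr0.
by rewrite scale1r addrC subrK.
Qed.

Lemma lift_step (z w : (P -> A) * A) : homot_cal z w ->
  exists x y, Qtilde x /\ Qtilde y /\ nu x = z /\ nu y = w /\ homot_tilde x y.
Proof.
case=> [[F s] [[HF [p Hp]] [E0 E1]]].
have HT : QtildeT (F, p, s) by split => //; rewrite Hp; ring.
exists (specT 0 (F, p, s)), (specT 1 (F, p, s)).
split; first exact: QtildeT_spec.
split; first exact: QtildeT_spec.
split; first by rewrite -E0.
split; first by rewrite -E1.
by exists (F, p, s).
Qed.

Lemma part2 (x y : (P -> A) * P * A) : pi0_tilde_rel x y -> pi0_cal_rel (nu x) (nu y).
Proof.
elim=> {x y} [x y [[[F p] s] [[HF Hp] [E0 E1]]]| x | x y _ IH | x y z _ IH1 _ IH2].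
- apply: rst_step; exists (F, s); split.
    split => //; exists p.
    have -> : F p = (F p + s * (s - 1)) - s * (s - 1) by ring.
    rewrite Hp; ring.
  by rewrite -E0 -E1.
- exact: rst_refl.
- exact: rst_sym.
- exact: rst_trans IH2.
Qed.

Lemma part4 (z w : (P -> A) * A) : pi0_cal_rel z w -> (Qcal z <-> Qcal w) /\
  forall x y, Qtilde x -> Qtilde y -> nu x = z -> nu y = w -> pi0_tilde_rel x y.
Proof.
elim=> {z w} [z w Hs | z | z w _ [IH1 IH2] | z u w _ [IH1 IH2] _ [IH3 IH4]].
- have [x0 [y0 [Hx0 [Hy0 [Ex0 [Ey0 Hxy]]]]]] := lift_step Hs.
  have Qz : Qcal z by rewrite -Ex0; exact: part1.
  have Qw : Qcal w by rewrite -Ey0; exact: part1.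
  split; first by split.
  move=> x y Hx Hy Ex Ey.
  apply: rst_trans (_ : pi0_tilde_rel x0 y).
    by apply: rst_step; apply: fiber => //; rewrite Ex Ex0.
  apply: rst_trans (_ : pi0_tilde_rel y0 y); first exact: rst_step.
  by apply: rst_step; apply: fiber => //; rewrite Ey Ey0.
- split => // x y Hx Hy Ex Ey; apply: rst_step; apply: fiber => //; by rewrite Ex Ey.
- split; first by split => h; apply/IH1.
  move=> x y Hx Hy Ex Ey; apply: rst_sym; exact: IH2.
- split; first by split => h; [apply/IH3/IH1 | apply/IH1/IH3].
  move=> x y Hx Hy Ex Ey.
  have Qu : Qcal u by apply/IH1; rewrite -Ex; exact: part1.
  have [m [Hm Em]] := lift_cal Qu.
  apply: rst_trans (IH2 x m Hx Hm Ex Em) (IH4 m y Hm Hy Em Ey).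
Qed.

End Proof.

Theorem theorem2p7 (A : comNzRingType) (P : lmodType A) :
  noetherian_ring A -> projective P ->
  (forall x : (P -> A) * P * A, Qtilde x -> Qcal (nu x)) /\
  (forall x y : (P -> A) * P * A, Qtilde x -> Qtilde y -> pi0_tilde_rel x y -> pi0_cal_rel (nu x) (nu y)) /\
  (forall z : (P -> A) * A, Qcal z -> exists x, Qtilde x /\ pi0_cal_rel z (nu x)) /\
  (forall x y : (P -> A) * P * A, Qtilde x -> Qtilde y -> pi0_cal_rel (nu x) (nu y) -> pi0_tilde_rel x y).
Proof.
move=> _ _; split; first exact: part1.
split; first by move=> x y _ _; exact: part2.
split.
  move=> z Hz; have [x [Hx Ex]] := lift_cal Hz; exists x; split => //.
  rewrite Ex; exact: rst_refl.
move=> x y Hx Hy H; have [_ H4] := part4 H; exact: H4.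
Qed.
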